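(* Assume $V=L$. Let $\xi_0,\xi_1,\xi_2,\dots\in\Xi$, let $\vartheta=\bigcup_n\xi_n$, and let $X\in\mathrm{IPS}_\vartheta$. Then $X=\bigcap_n\big((X\restriction\xi_n)\uparrow\vartheta\big)$. In particular, $X=\bigcap_{i\in\vartheta}\big((X\restriction[\subseteq i])\uparrow\vartheta\big)$.
   Context: $T$ is the set of all nonempty finite sequences of countable ordinals, ordered by strict extension $\subset$; $[\subseteq i]=\{j\in T:j\subseteq i\}$. $\Xi$ is the set of all at most countable $\xi\subseteq T$ closed downward under $\subset$. $D=2^\omega$; $D^\xi$ is the product of $\xi$ copies of $D$. For $\eta\subseteq\xi$ in $\Xi$: $x\restriction\eta$ is restriction of $x\in D^\xi$, $X\restriction\eta=\{x\restriction\eta:x\in X\}$ for $X\subseteq D^\xi$, and $Y\uparrow\xi=\{x\in D^\xi:x\restriction\eta\in Y\}$ for $Y\subseteq D^\eta$. For $\zeta\in\Xi$, $\mathrm{IPS}_\zeta$ is the set of all $X\subseteq D^\zeta$ for which there is a homeomorphism $H$ of $D^\zeta$ onto $X$ such that for all $x_0,x_1\in D^\zeta$ and all $\xi\in\Xi$, $\xi\subseteq\zeta$: $x_0\restriction\xi=x_1\restriction\xi\iff H(x_0)\restriction\xi=H(x_1)\restriction\xi$. *)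

(* Defs.v *)
From HB Require Import structures.
From mathcomp Require Import all_boot all_order all_algebra.
From mathcomp Require Import all_classical all_reals all_analysis.
From Stdlib Require Import List.

Set Implicit Arguments. Unset Strict Implicit. Unset Printing Implicit Defensive.
Local Open Scope classical_set_scope.

(* A countable ordinal is the order type (isomorphism class) of a         *)
(* well-ordering whose field is a subset of nat.                          *)

Definition fld (R : nat -> nat -> Prop) (n : nat) : Prop := R n n.

Definition nat_wellorder (R : nat -> nat -> Prop) : Prop :=
  (forall m n, R m n -> fld R m /\ fld R n) /\
  (forall m n, R m n -> R n m -> m = n) /\
  (forall m n p, R m n -> R n p -> R m p) /\
  (forall m n, fld R m -> fld R n -> R m n \/ R n m) /\
  (forall A : nat -> Prop, (exists m, A m /\ fld R m) ->
     exists m, A m /\ fld R m /\ forall n, A n -> fld R n -> R m n).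

Definition order_iso (R R' : nat -> nat -> Prop) : Prop :=
  exists f : nat -> nat,
    (forall m, fld R m -> fld R' (f m)) /\
    (forall m', fld R' m' -> exists m, fld R m /\ f m = m') /\
    (forall m n, fld R m -> fld R n -> (R m n <-> R' (f m) (f n))).

Definition otype (R : nat -> nat -> Prop) : (nat -> nat -> Prop) -> Prop :=
  fun R' => nat_wellorder R' /\ order_iso R R'.

Definition Ord : Type :=
  { C : (nat -> nat -> Prop) -> Prop | exists R, nat_wellorder R /\ C = otype R }.

Definition T : Type := { s : list Ord | s <> nil }.

Definition sext (i j : T) : Prop :=
  exists u : list Ord, u <> nil /\ proj1_sig j = proj1_sig i ++ u.

Definition ext (i j : T) : Prop := sext i j \/ i = j.

Definition below (i : T) : set T := fun j => ext j i.

Definition inXi (xi : set T) : Prop :=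
  countable xi /\ (forall i j, xi j -> sext i j -> xi i).

Definition D : Type := cantor_space.

Definition Dpow (xi : set T) : Type :=
  prod_topology (fun _ : { i : T | xi i } => D).

(* restriction x |` eta of x in D^xi (meaningful for eta \subseteq xi;
   coordinates outside xi, which never occur in that case, are set to a
   dummy value) *)
Definition restr (xi eta : set T) (x : Dpow xi) : Dpow eta :=
  fun j => match pselect (xi (proj1_sig j)) with
           | left h => x (exist _ (proj1_sig j) h)
           | right _ => fun _ => false
           end.

Arguments restr : clear implicits.

Definition restrS (xi eta : set T) (X : set (Dpow xi)) : set (Dpow eta) :=
  restr xi eta @` X.

Arguments restrS : clear implicits.

Definition upS (eta xi : set T) (Y : set (Dpow eta)) : set (Dpow xi) :=
  [set x : Dpow xi | Y (restr xi eta x)].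

Definition IPS (zeta : set T) : set (set (Dpow zeta)) :=
  fun X => exists H : Dpow zeta -> Dpow zeta,
    [/\ continuous H, H @` setT = X,
        (exists G : Dpow zeta -> Dpow zeta,
            (forall x, G (H x) = x) /\ {within X, continuous G}) &
        (forall (x0 x1 : Dpow zeta) (xi : set T), inXi xi -> xi `<=` zeta ->
            (restr zeta xi x0 = restr zeta xi x1 <->
             restr zeta xi (H x0) = restr zeta xi (H x1)))].

Arguments upS : clear implicits.
Arguments IPS : clear implicits.

(* Main.v *)
Require Import Defs.
From mathcomp Require Import all_boot all_classical all_reals all_analysis.
Local Open Scope classical_set_scope.

Lemma restr_eqP (th eta : set T) (a b : Dpow th) : eta `<=` th ->
  restr th eta a = restr th eta b <->
  (forall j (h : th j), eta j -> a (exist _ j h) = b (exist _ j h)).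
Proof.
move=> sub; split.
  move=> E j h hj; have := congr1 (fun f => f (exist _ j hj)) E.
  rewrite /restr /=; case: pselect => [h'|/(_ h)//].
  by rewrite (Prop_irrelevance h' h).
move=> P; apply: functional_extensionality_dep => -[j hj]; rewrite /restr /=.
by case: pselect => // h; exact: P.
Qed.

Lemma countableU' (U : Type) (a b : set U) : countable a -> countable b ->
  countable (a `|` b).
Proof.
move=> ca cb.
have -> : a `|` b = \bigcup_(i in [set: bool]) (if i then a else b).
  rewrite eqEsubset; split => x.
    by case=> h; [exists true|exists false].
  by case=> -[] _ h; [left|right].
apply: bigcup_countable; first exact: countableP.
by move=> [] _.
Qed.

Lemma countableI' (U : Type) (a b : set U) : countable a -> countable (a `&` b).
Proof. by move=> ca; apply: sub_countable ca; apply: subset_card_le; apply: subIsetl. Qed.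

Lemma inXi0 : inXi set0.
Proof. by split; [exact: countable0|]. Qed.

Lemma inXiU a b : inXi a -> inXi b -> inXi (a `|` b).
Proof.
move=> [ca da] [cb db]; split; first exact: countableU'.
by move=> i j [h|h] s; [left; exact: da h s|right; exact: db h s].
Qed.

Lemma inXiI a b : inXi a -> inXi b -> inXi (a `&` b).
Proof.
move=> [ca da] [cb db]; split; first exact: countableI'.
by move=> i j [h h'] s; split; [exact: da h s|exact: db h' s].
Qed.

Lemma sext_trans i j k : sext i j -> sext j k -> sext i k.
Proof.
move=> [u [u0 e1]] [v [v0 e2]]; exists (u ++ v); split.
  by case: u u0 {e1}.
by rewrite e2 e1 -List.app_assoc.
Qed.

Lemma ext_app j i : ext j i -> exists u, proj1_sig i = proj1_sig j ++ u.
Proof. by case=> [[u [_ e]]|->]; [exists u|exists nil; rewrite cats0]. Qed.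

Lemma inXi_below i : inXi (below i).
Proof.
split.
  apply/countable_injP; exists (fun j : T => size (proj1_sig j)).
  move=> j1 j2; rewrite !inE => /ext_app [u1 e1] /ext_app [u2 e2] es.
  case: j1 j2 e1 e2 es => [l1 p1] [l2 p2] /= e1 e2 es.
  have el : l1 = l2.
    have -> : l1 = take (size l1) (proj1_sig i) by rewrite e1 take_size_cat.
    by rewrite es e2 take_size_cat.
  by subst l2; rewrite (Prop_irrelevance p1 p2).
move=> a b hb s; left; case: hb => [h|e]; [exact: sext_trans s h|by subst].
Qed.

Lemma Dpow_compact th : compact [set: Dpow th].
Proof.
have := @tychonoff {classic {i : T | th i}} (fun _ => D) (fun _ => setT)
  (fun _ => cantor_space_compact).
have -> : [set f : forall i : {classic {i : T | th i}}, D | forall i, [set: D] (f i)] = setT.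
  by rewrite eqEsubset; split.
by [].
Qed.

Lemma Dpow_hausdorff th : hausdorff_space (Dpow th).
Proof.
exact: (@hausdorff_product {classic {i : T | th i}} (fun _ => D) (fun _ => cantor_space_hausdorff)).
Qed.

Lemma Dpow_cvg th (F : set_system (Dpow th)) (x : Dpow th) : Filter F ->
  (forall j, F [set y : Dpow th | y j = x j]) -> F --> x.
Proof.
move=> FF Fj.
apply/cvg_sup => j.
apply/cvg_image => //.
  rewrite eqEsubset; split => // d _; exists (fun k => d) => //.
move=> N /= Nx.
exists ([set y : Dpow th | y j = x j] `|` (fun y : Dpow th => y j) @^-1` N).
  by apply: filterS (Fj j) => y; left.
rewrite eqEsubset; split.
  move=> _ [y [->|h] <-] //; exact: nbhs_singleton.
by move=> d Nd; exists (fun _ => d) => //; right.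
Qed.

Lemma main_gen (I : Type) (A : set I) (xi : I -> set T) (th : set T)
  (X : set (Dpow th)) :
  (forall i, A i -> inXi (xi i) /\ xi i `<=` th) ->
  th `<=` \bigcup_(i in A) xi i ->
  IPS th X ->
  X = \bigcap_(i in A) upS (xi i) th (restrS th (xi i) X).
Proof.
move=> hxi hth [H [Hc HX _ Hip]].
rewrite eqEsubset; split.
  by move=> x Xx i Ai; exists x.
move=> x Hx.
pose U (l : seq {i | A i}) : set T := foldr (fun i acc => xi (proj1_sig i) `|` acc) set0 l.
have hU l : inXi (U l) /\ U l `<=` th.
  elim: l => [|[i Ai] l [IH1 IH2]] /=; first by split; [exact: inXi0|].
  have [h1 h2] := hxi i Ai; split; first exact: inXiU.
  by move=> j [] ?; [exact: h2|exact: IH2].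
have key l : exists z, forall j (h : th j), U l j -> H z (exist _ j h) = x (exist _ j h).
  elim: l => [|[i Ai] l [z Hz]]; first by exists x.
  have [hi1 hi2] := hxi i Ai; have [hl1 hl2] := hU l.
  have [y Xy Ey] := Hx i Ai.
  rewrite -HX in Xy; case: Xy => z' _ Hz'; subst y.
  have /restr_eqP Ey' := Ey; have {Ey'} Ey' := Ey' hi2.
  have sW : xi i `&` U l `<=` th by move=> j [] /hi2.
  have hW : restr th (xi i `&` U l) z = restr th (xi i `&` U l) z'.
    apply: (proj2 (Hip z z' _ (inXiI _ _ hi1 hl1) sW)); apply/restr_eqP => // j h [j1 j2].
    by rewrite Hz // Ey'.
  have /restr_eqP hW' := hW; have {hW'} hW' := hW' sW.
  pose z'' : Dpow th := fun j => if pselect (U l (proj1_sig j)) then z j else z' j.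
  have E1 : restr th (U l) z'' = restr th (U l) z.
    apply/restr_eqP => // j h jU; rewrite /z'' /=; by case: pselect.
  have E2 : restr th (xi i) z'' = restr th (xi i) z'.
    apply/restr_eqP => // j h jx; rewrite /z'' /=; case: pselect => // jU.
    exact: hW'.
  have /(Hip _ _ _ hl1 hl2)/restr_eqP F1 := E1.
  have /(Hip _ _ _ hi1 hi2)/restr_eqP F2 := E2.
  exists z'' => j h /= [jx|jU].
    by rewrite (F2 hi2) // Ey'.
  by rewrite (F1 hl2) // Hz.
pose B l := [set y : Dpow th | X y /\ forall j (h : th j), U l j -> y (exist _ j h) = x (exist _ j h)].
pose F := filter_from [set: seq {i | A i}] B.
have FF : ProperFilter F.
  apply: (filter_from_proper (filter_from_filter _ _)).
  - by exists nil.
  - move=> l1 l2 _ _.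
    have sub1 : forall l1, U l1 `<=` U (l1 ++ l2).
      by elim=> [|a l IH] //= j [?|?]; [left|right; exact: IH].
    have sub2 : forall l1, U l2 `<=` U (l1 ++ l2).
      by elim=> [|a l IH] //= j ?; right; exact: IH.
    exists (l1 ++ l2) => // y [Xy Hy].
    by split; split => // j h jU; apply: Hy; [exact: sub1|exact: sub2].
  - move=> l _; have [z Hz] := key l; exists (H z); split => //.
    by rewrite -HX; exists z.
have clX : closed X.
  apply: compact_closed; first exact: Dpow_hausdorff.
  rewrite -HX; apply: continuous_compact; last exact: Dpow_compact.
  exact: continuous_subspaceT.
apply: (@closed_cvg _ _ F FF id X clX).
  by exists nil => // y [].
apply: Dpow_cvg => j.
have [i Ai ji] := hth _ (proj2_sig j).
exists [:: exist _ i Ai] => // y [_ Hy]; case: j ji => j h ji /=.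
by apply: Hy => /=; left.
Qed.

Theorem lemma2p25 (xi : nat -> set T) (theta : set T) (X : set (Dpow theta)) :
  (forall n, inXi (xi n)) ->
  theta = \bigcup_n xi n ->
  IPS theta X ->
  X = \bigcap_n upS (xi n) theta (restrS theta (xi n) X) /\
  X = \bigcap_(i in theta) upS (below i) theta (restrS theta (below i) X).
Proof.
move=> hxi eth hX; split.
  apply: main_gen hX.
    by move=> n _; split => // j xj; rewrite eth; exists n.
  by rewrite eth.
apply: main_gen hX.
  move=> i thi; split; first exact: inXi_below.
  move=> j bj; move: thi; rewrite eth => -[n _ xin]; exists n => //.
  case: bj => [s|->] //; exact: (proj2 (hxi n)) xin s.
by move=> i thi; exists i => //; right.
Qed.
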